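(* Let $A\subset\mathbb R^n$ be any set and $f:A\to\mathbb R$. Assume there is a constant $C>0$ and for each $p\in A$ a vector $a_p\in\mathbb R^n$ such that $$f(p)+\langle x-p,a_p\rangle-\tfrac C2\|x-p\|^2\le f(x)\le f(p)+\langle x-p,a_p\rangle+\tfrac C2\|x-p\|^2\quad\text{for all }x\in A,$$ and such that for all $p,q\in A$ and all $x\in\mathbb R^n$ $$f(p)+\langle x-p,a_p\rangle-\tfrac C2\|x-p\|^2\le f(q)+\langle x-q,a_q\rangle+\tfrac C2\|x-q\|^2.$$ Then there is a function $F:\mathbb R^n\to\mathbb R$ of class $C^{1,1}$ whose restriction to $A$ is $f$.
   Context: No closedness or measurability of $A$ and no continuity of $f$ or of $p\mapsto a_p$ is assumed. $C^{1,1}$ means continuously differentiable with locally Lipschitz derivative. *)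

(* Defs.v *)
From HB Require Import structures.
From mathcomp Require Import all_boot all_order all_algebra.
From mathcomp Require Import all_classical all_reals all_analysis.
Set Implicit Arguments. Unset Strict Implicit. Unset Printing Implicit Defensive.
Import Order.TTheory GRing.Theory Num.Theory.
Import numFieldNormedType.Exports.
Local Open Scope ring_scope.
Local Open Scope classical_set_scope.

Definition dotv (R : realType) (n : nat) (u v : 'rV[R]_n) : R :=
  \sum_(i < n) u 0 i * v 0 i.

Definition enorm (R : realType) (n : nat) (u : 'rV[R]_n) : R :=
  Num.sqrt (dotv u u).

(* F : R^n -> R is C^{1,1}: differentiable everywhere, with gradient G
   (i.e. dF(x) h = <h, G x>), and G is locally Lipschitz (hence continuous). *)
Definition C11 (R : realType) (n : nat) (F : 'rV[R]_n -> R) : Prop :=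
  exists G : 'rV[R]_n -> 'rV[R]_n,
    (forall x : 'rV[R]_n,
        differentiable F x /\ ('d F x : 'rV[R]_n -> R) = (fun h => dotv h (G x))) /\
    (forall x : 'rV[R]_n, exists r : R, exists L : R, 0 < r /\
        forall y z : 'rV[R]_n, enorm (y - x) < r -> enorm (z - x) < r ->
          enorm (G y - G z) <= L * enorm (y - z)).

(* Main.v *)
Require Import Defs.
From HB Require Import structures.
From mathcomp Require Import all_boot all_order all_algebra.
From mathcomp Require Import all_classical all_reals all_analysis.
From mathcomp Require Import ring lra.
Import Order.TTheory GRing.Theory Num.Theory.
Import numFieldNormedType.Exports.
Local Open Scope ring_scope.
Local Open Scope classical_set_scope.

Set Implicit Arguments. Unset Strict Implicit. Unset Printing Implicit Defensive.

Section Dot.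
Variables (R : realType) (n : nat).
Local Notation V := 'rV[R]_n.
Implicit Types u v w : V.

Lemma dotvC u v : dotv u v = dotv v u.
Proof. by rewrite /dotv; apply: eq_bigr => i _; rewrite mulrC. Qed.

Lemma dotvDl u v w : dotv (u + v) w = dotv u w + dotv v w.
Proof. by rewrite /dotv -big_split; apply: eq_bigr => i _; rewrite mxE mulrDl. Qed.

Lemma dotvZl (a : R) u w : dotv (a *: u) w = a * dotv u w.
Proof. by rewrite /dotv mulr_sumr; apply: eq_bigr => i _; rewrite mxE mulrA. Qed.

Lemma dotvNl u w : dotv (- u) w = - dotv u w.
Proof. by rewrite -scaleN1r dotvZl mulN1r. Qed.

Lemma dotvBl u v w : dotv (u - v) w = dotv u w - dotv v w.
Proof. by rewrite dotvDl dotvNl. Qed.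

Lemma dotv0l w : dotv 0 w = 0.
Proof. by rewrite /dotv big1 // => i _; rewrite mxE mul0r. Qed.

Lemma dotvDr u v w : dotv w (u + v) = dotv w u + dotv w v.
Proof. by rewrite !(dotvC w) dotvDl. Qed.
Lemma dotvZr (a : R) u w : dotv w (a *: u) = a * dotv w u.
Proof. by rewrite !(dotvC w) dotvZl. Qed.
Lemma dotvNr u w : dotv w (- u) = - dotv w u.
Proof. by rewrite !(dotvC w) dotvNl. Qed.
Lemma dotvBr u v w : dotv w (u - v) = dotv w u - dotv w v.
Proof. by rewrite !(dotvC w) dotvBl. Qed.
Lemma dotv0r w : dotv w 0 = 0.
Proof. by rewrite dotvC dotv0l. Qed.

Lemma dotv_ge0 u : 0 <= dotv u u.
Proof. by apply: sumr_ge0 => i _; rewrite -expr2 sqr_ge0. Qed.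

Lemma enorm_sq u : enorm u ^+ 2 = dotv u u.
Proof. by rewrite /enorm sqr_sqrtr // dotv_ge0. Qed.

Lemma enorm_ge0 u : 0 <= enorm u.
Proof. exact: sqrtr_ge0. Qed.

Lemma dotv_sum (T : Type) (s : seq T) (F : T -> V) w :
  dotv (\sum_(e <- s) F e) w = \sum_(e <- s) dotv (F e) w.
Proof.
elim: s => [|e s IH]; first by rewrite !big_nil dotv0l.
by rewrite !big_cons dotvDl IH.
Qed.

Lemma nqD u v : dotv (u + v) (u + v) = dotv u u + 2 * dotv u v + dotv v v.
Proof. rewrite dotvDl !dotvDr (dotvC v u); ring. Qed.

Lemma nqB u v : dotv (u - v) (u - v) = dotv u u - 2 * dotv u v + dotv v v.
Proof. rewrite nqD dotvNr dotvNl dotvNr; ring. Qed.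

Lemma nqZ (a : R) u : dotv (a *: u) (a *: u) = a ^+ 2 * dotv u u.
Proof. rewrite dotvZl dotvZr; ring. Qed.

Lemma dotv_le u v : 2 * dotv u v <= dotv u u + dotv v v.
Proof.
have := dotv_ge0 (u - v); rewrite nqB => H.
by rewrite -subr_ge0; apply: le_trans H _; rewrite le_eqVlt; apply/orP; left; apply/eqP; ring.
Qed.

End Dot.

Unset Implicit Arguments.

Lemma small_le (R : realType) (a b c : R) : 0 <= c ->
  (forall t : R, 0 < t -> a <= b + t * c) -> a <= b.
Proof.
move=> c0 H; apply/ler_addgt0Pr => e e0.
have t0 : 0 < e / (c + 1) by apply: divr_gt0 => //; lra.
apply: le_trans (H _ t0) _; rewrite lerD2l.
rewrite mulrAC ler_pdivrMr; last lra.
by rewrite mulrDr mulr1 lerDl ltW.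
Qed.

Section Core.
Variables (R : realType) (n : nat).
Local Notation V := 'rV[R]_n.
Variables (h : V -> R) (K : R).
Hypothesis K0 : 0 <= K.
Hypothesis hconv : forall (x y : V) (a : R), 0 <= a -> a <= 1 ->
  h (a *: x + (1 - a) *: y) <= a * h x + (1 - a) * h y.
Hypothesis hsc : forall x u : V, h (x + u) + h (x - u) <= 2 * h x + K * dotv u u.

Lemma conv2 (x k : V) (s t : R) : 0 < s -> 0 < t ->
  (s + t) * h x <= t * h (x - s *: k) + s * h (x + t *: k).
Proof.
move=> s0 t0.
have st : s + t != 0 by rewrite gt_eqF //; lra.
have a0 : 0 <= t / (s + t) by apply: divr_ge0; lra.
have a1 : t / (s + t) <= 1 by rewrite ler_pdivrMr; lra.
have := hconv (x - s *: k) (x + t *: k) (t / (s + t)) a0 a1.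
have -> : t / (s + t) *: (x - s *: k) + (1 - t / (s + t)) *: (x + t *: k) = x.
  by apply/rowP => i; rewrite !mxE; field.
move=> H; apply: le_trans (ler_wpM2l _ H) _; first lra.
by rewrite le_eqVlt; apply/orP; left; apply/eqP; field.
Qed.

Lemma TP (x k : V) (s t : R) : 0 < s -> 0 < t ->
  t * (h x - h (x - s *: k)) <= s * (h (x + t *: k) - h x).
Proof. move=> s0 t0; have := @conv2 x k s t s0 t0; nra. Qed.


Definition Qs (x k : V) := [set y : R | exists2 t, 0 < t & y = (h (x + t *: k) - h x) / t].
Definition dq (x k : V) := inf (Qs x k).

Lemma Qs_lb (x k : V) : lbound (Qs x k) (h x - h (x - k)).
Proof.
move=> y [t t0 ->]; rewrite ler_pdivlMr //.
have := @TP x k 1 t ltr01 t0; rewrite scale1r; nra.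
Qed.

Lemma Qs_n0 (x k : V) : Qs x k !=set0.
Proof. by exists ((h (x + 1 *: k) - h x) / 1); exists 1. Qed.

Lemma S1 (x k : V) (t : R) : 0 < t -> t * dq x k <= h (x + t *: k) - h x.
Proof.
move=> t0.
have : dq x k <= (h (x + t *: k) - h x) / t.
  apply: (ge_inf _); first by exists (h x - h (x - k)); exact: Qs_lb.
  by exists t.
rewrite ler_pdivlMr // mulrC //.
Qed.

Lemma S2 (x k : V) (s : R) : 0 < s -> h x - h (x - s *: k) <= s * dq x k.
Proof.
move=> s0; rewrite mulrC -ler_pdivrMr //.
apply: lb_le_inf; first exact: Qs_n0.
move=> y [t t0 ->]; rewrite ler_pdivlMr // mulrAC ler_pdivrMr //.
have := @TP x k s t s0 t0; nra.
Qed.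

Lemma SW (x k : V) (t : R) : 0 < t ->
  h (x + t *: k) - h x <= t * dq x k + t * (t * (K * dotv k k)).
Proof.
move=> t0; have := hsc x (t *: k); rewrite nqZ.
have := @S2 x k t t0; nra.
Qed.


Lemma nqN (k : V) : dotv (- k) (- k) = dotv k k.
Proof. by rewrite dotvNl dotvNr opprK. Qed.

Lemma nq_ge0K (k : V) : 0 <= K * dotv k k.
Proof. by apply: mulr_ge0 => //; apply: dotv_ge0. Qed.

Lemma dq_odd (x k : V) : dq x (- k) = - dq x k.
Proof.
apply/eqP; rewrite eq_le; apply/andP; split.
  apply: (@small_le _ _ _ (K * dotv k k)); first exact: nq_ge0K.
  move=> t t0; have := @S1 x (- k) t t0; have := @S1 x k t t0.
  have := hsc x (t *: k); rewrite nqZ scalerN; nra.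
apply: (@small_le _ _ _ (K * dotv k k)); first exact: nq_ge0K.
move=> t t0; have := @S2 x k t t0; have := @SW x (- k) t t0.
rewrite nqN scalerN; nra.
Qed.

Lemma dq0 (x : V) : dq x 0 = 0.
Proof.
have := dq_odd x 0; rewrite oppr0 => /eqP; rewrite -addr_eq0 -mulr2n.
by rewrite mulrn_eq0 /= => /eqP.
Qed.

Lemma dq_homp (x k : V) (c : R) : 0 < c -> dq x (c *: k) = c * dq x k.
Proof.
move=> c0; apply/eqP; rewrite eq_le; apply/andP; split.
  apply: (@small_le _ _ _ (c * (c * (K * dotv k k)))).
    by apply: mulr_ge0; [lra|apply: mulr_ge0; [lra|exact: nq_ge0K]].
  move=> t t0; have tc0 : 0 < t * c by apply: mulr_gt0.
  have := @S1 x (c *: k) t t0; have := @SW x k (t * c) tc0.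
  rewrite scalerA; nra.
apply: (@small_le _ _ _ (K * dotv (c *: k) (c *: k))); first exact: nq_ge0K.
move=> t t0; have tc0 : 0 < t * c by apply: mulr_gt0.
have := @S1 x k (t * c) tc0; have := @SW x (c *: k) t t0.
rewrite scalerA; nra.
Qed.


Lemma dq_addle (x k1 k2 : V) : dq x (k1 + k2) <= dq x k1 + dq x k2.
Proof.
apply: (@small_le _ _ _ (K * dotv (k1 + k2) (k1 + k2) / 4 + K * dotv k1 k1 + K * dotv k2 k2)).
  have := nq_ge0K (k1 + k2); have := nq_ge0K k1; have := nq_ge0K k2; lra.
move=> t t0.
have h1 := @S1 x (k1 + k2) t t0.
have h2 := @SW x k1 t t0.
have h3 := @SW x k2 t t0.
have h4 := hsc (x + (t / 2) *: (k1 + k2)) ((t / 2) *: (k1 + k2)).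
have e1 : x + (t / 2) *: (k1 + k2) + (t / 2) *: (k1 + k2) = x + t *: (k1 + k2).
  by apply/rowP => i; rewrite !mxE; field.
have e2 : x + (t / 2) *: (k1 + k2) - (t / 2) *: (k1 + k2) = x.
  by apply/rowP => i; rewrite !mxE; field.
rewrite e1 e2 nqZ in h4.
have h5 := hconv (x + t *: k1) (x + t *: k2) (1 / 2) ltac:(lra) ltac:(lra).
have e3 : 1 / 2 *: (x + t *: k1) + (1 - 1 / 2) *: (x + t *: k2) = x + (t / 2) *: (k1 + k2).
  by apply/rowP => i; rewrite !mxE; field.
rewrite e3 in h5.
nra.
Qed.


Lemma dq_add (x k1 k2 : V) : dq x (k1 + k2) = dq x k1 + dq x k2.
Proof.
apply/eqP; rewrite eq_le dq_addle /=.
have := dq_addle x (- k1) (- k2); rewrite -opprD !dq_odd; lra.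
Qed.

Lemma dq_hom (x k : V) (c : R) : dq x (c *: k) = c * dq x k.
Proof.
have [c0|c0|->] := ltgtP c 0; last by rewrite scale0r dq0 mul0r.
  have -> : c *: k = - ((- c) *: k) by rewrite scaleNr opprK.
  rewrite dq_odd dq_homp; last lra.
  lra.
exact: dq_homp.
Qed.

Definition Gd (x : V) : V := \row_i dq x 'e_i.

Lemma dq_dot (x k : V) : dq x k = dotv k (Gd x).
Proof.
rewrite {1}(row_sum_delta k).
rewrite (big_morph (dq x) (dq_add x) (dq0 x)) /dotv.
by apply: eq_bigr => i _; rewrite dq_hom mxE.
Qed.

Lemma core_taylor (x k : V) :
  0 <= h (x + k) - h x - dotv k (Gd x) <= K * dotv k k.
Proof.
rewrite -dq_dot; have := @S1 x k 1 ltr01; have := @SW x k 1 ltr01.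
rewrite scale1r; lra.
Qed.

End Core.

Set Implicit Arguments.
Section S.
Variables (R : realType) (n : nat).
Local Notation V := 'rV[R]_n.

Lemma coord_le (k : V) i : `|k 0 i| <= `|k|.
Proof.
rewrite [leRHS]/Num.norm /= mx_normrE; apply/bigmax_geP; right => /=; exists (0, i) => //.
Qed.

Lemma nq_le (k : V) : dotv k k <= n%:R * `|k| ^+ 2.
Proof.
have H : \sum_(i < n) k 0 i * k 0 i <= \sum_(i < n) `|k| ^+ 2.
  apply: ler_sum => i _; apply: le_trans (ler_norm _) _; rewrite normrM expr2.
  by apply: ler_pM => //; apply: coord_le.
by apply: le_trans H _; rewrite sumr_const card_ord mulr_natl.
Qed.

Lemma dot_le (k g : V) : `|dotv k g| <= (\sum_i `|g 0 i|) * `|k|.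
Proof.
rewrite /dotv mulr_suml; apply: le_trans (ler_norm_sum _ _ _) _.
apply: ler_sum => i _; rewrite normrM mulrC; apply: ler_wpM2l => //; exact: coord_le.
Qed.

Definition dfun (g : V) := fun h : V => dotv h g.
Lemma dfun_lin (g : V) : linear (dfun g).
Proof. by move=> a u v; rewrite /dfun dotvDl dotvZl. Qed.
HB.instance Definition _ (g : V) := GRing.isLinear.Build R V R *:%R (dfun g) (dfun_lin g).

Lemma dfun_cont (g : V) : continuous (dfun g).
Proof.
apply/linear_bounded_continuous/bounded_funP => r.
exists ((\sum_i `|g 0 i|) * r) => k kr.
apply: le_trans (dot_le k g) _; apply: ler_wpM2l => //.
by apply: sumr_ge0 => i _.
Qed.

Lemma taylor_diff (F : V -> R) (G : V -> V) (K : R) : 0 <= K ->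
  (forall x k, `|F (x + k) - F x - dotv k (G x)| <= K * dotv k k) ->
  forall x, differentiable F x /\ ('d F x : V -> R) = (fun h => dotv h (G x)).
Proof.
move=> K0 T x.
have dF : F \o shift x = cst (F x) + dfun (G x) +o_ 0 id.
  apply/eqaddoP => e e0.
  have Kn0 : 0 <= K * n%:R by apply: mulr_ge0.
  have d0 : 0 < e / (K * n%:R + 1) by apply: divr_gt0 => //; lra.
  near=> k.
  change (`|F (k + x) - (F x + dfun (G x) k)| <= e * `|k|).
  rewrite /dfun opprD addrA [k + x]addrC.
  apply: le_trans (T x k) _.
  have kd : `|k| <= e / (K * n%:R + 1).
    by near: k; apply: filterS (nbhs0_le d0).
  apply: le_trans (ler_wpM2l K0 (nq_le k)) _.
  have k0 : 0 <= `|k| by [].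
  have : (K * n%:R + 1) * `|k| <= e.
    by rewrite mulrC -ler_pdivlMr //; lra.
  nra.
have dc : continuous (dfun (G x)) by exact: dfun_cont.
have dd := diff_unique dc dF.
split; last exact: dd.
by apply/diff_locallyP; rewrite dd; split; [exact: dfun_cont | exact: dF].
Unshelve. all: by end_near.
Qed.

Lemma taylor_lip (F : V -> R) (G : V -> V) (K : R) : 0 <= K ->
  (forall x k, `|F (x + k) - F x - dotv k (G x)| <= K * dotv k k) ->
  forall x d : V, dotv (G (x + d) - G x) (G (x + d) - G x) <= (6 * K + 1) ^+ 2 * dotv d d.
Proof.
move=> K0 T x d.
set g := G (x + d) - G x.
have key : forall u : V, dotv u g <= 3 * K * (dotv u u + dotv d d).
  move=> u.
  have a1 := T x d; have a2 := T x (u + d); have a3 := T (x + d) u.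
  have e : x + (u + d) = x + d + u by rewrite [u + d]addrC addrA.
  rewrite e in a2.
  have eg : dotv u g = dotv u (G (x + d)) - dotv u (G x) by rewrite /g dotvBr.
  have ed : dotv (u + d) (G x) = dotv u (G x) + dotv d (G x) by rewrite dotvDl.
  have nq1 := ler_wpM2l K0 (dotv_le u d). rewrite nqD in a2.
  move: a1 a2 a3; rewrite ed eg.
  move: (F (x + d)) (F x) (F (x + d + u)) => p q r.
  rewrite !ler_norml.
  have := mulr_ge0 K0 (dotv_ge0 u); have := mulr_ge0 K0 (dotv_ge0 d).
  nra.
set L := 6 * K + 1.
have L0 : 0 < L by rewrite /L; lra.
have Ln : L != 0 by apply/lt0r_neq0.
have t0 : 0 < L^-1 by rewrite invr_gt0.
have := key (L^-1 *: g); rewrite dotvZl nqZ.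
have g0 := dotv_ge0 g; have d0 := dotv_ge0 d.
move: (dotv g g) (dotv d d) g0 d0 => G0 D0 g0 d0 H.
have := ler_wpM2l (ltW (exprn_gt0 2 L0)) H.
have -> : L ^+ 2 * (L^-1 * G0) = L * G0 by field.
have -> : L ^+ 2 * (3 * K * (L^-1 ^+ 2 * G0 + D0)) = 3 * K * (G0 + L ^+ 2 * D0) by field.
rewrite /L => H2.
have h3 : 0 <= (6 * K + 1) ^+ 2 * D0 by apply: mulr_ge0 => //; apply: sqr_ge0.
nra.
Qed.

Lemma taylor_C11 (F : V -> R) (G : V -> V) (K : R) : 0 <= K ->
  (forall x k, `|F (x + k) - F x - dotv k (G x)| <= K * dotv k k) -> C11 F.
Proof.
move=> K0 T; exists G; split; first exact: (taylor_diff K0 T).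
move=> x; exists 1, (6 * K + 1); split => // y z _ _.
have := taylor_lip K0 T z (y - z).
have -> : z + (y - z) = y by rewrite addrC subrK.
move=> H; rewrite /enorm.
apply: le_trans (ler_wsqrtr H) _.
rewrite sqrtrM; last exact: sqr_ge0.
by rewrite sqrtr_sqr ger0_norm //; lra.
Qed.
End S.

Unset Implicit Arguments.

Lemma L_inf (R : realType) (S : set R) (al c : R) : S !=set0 -> has_lbound S ->
  0 <= al -> (forall v, S v -> c <= al * v) -> c <= al * inf S.
Proof.
move=> [v0 Sv0] lb al0 H.
have [al_eq|al1] := eqVneq al 0.
  by have := H _ Sv0; rewrite al_eq !mul0r.
have {}al1 : 0 < al by rewrite lt0r al1.
rewrite mulrC -ler_pdivrMr //; apply: lb_le_inf; first by exists v0.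
by move=> v Sv; rewrite ler_pdivrMr // mulrC; apply: H.
Qed.

Section Main.
Variables (R : realType) (n : nat) (A : set 'rV[R]_n)
  (f : 'rV[R]_n -> R) (C : R) (a : 'rV[R]_n -> 'rV[R]_n).
Local Notation V := 'rV[R]_n.
Hypothesis C0 : 0 < C.
Hypothesis H2 : forall p q x, A p -> A q ->
     f p + dotv (x - p) (a p) - C / 2 * enorm (x - p) ^+ 2 <=
     f q + dotv (x - q) (a q) + C / 2 * enorm (x - q) ^+ 2.

Definition Qf (q y : V) := f q + dotv (y - q) (a q) + C / 2 * dotv (y - q) (y - q) + C / 2 * dotv y y.
Definition ell (p y : V) := f p + dotv (y - p) (a p) - C / 2 * dotv (y - p) (y - p) + C / 2 * dotv y y.

Lemma ell_le p q y : A p -> A q -> ell p y <= Qf q y.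
Proof.
move=> Ap Aq; have := H2 p q y Ap Aq; rewrite !enorm_sq /ell /Qf; lra.
Qed.

Lemma ell_aff p y : ell p y = (f p - dotv p (a p) - C / 2 * dotv p p) + dotv y (a p + C *: p).
Proof.
by rewrite /ell nqB dotvBl dotvDr dotvZr; field.
Qed.

Lemma Q_sc q y u : Qf q (y + u) + Qf q (y - u) = 2 * Qf q y + 2 * C * dotv u u.
Proof.
rewrite /Qf.
have -> : y + u - q = (y - q) + u by rewrite addrAC.
have -> : y - u - q = (y - q) - u by rewrite addrAC.
set w := y - q.
by rewrite nqD nqB (nqD y u) (nqB y u) !dotvDl !dotvNl; field.
Qed.

Definition comb := seq (R * (V * V)).
Definition valid (x : V) (s : comb) :=
  (forall e, e \in s -> 0 <= e.1 /\ A e.2.1) /\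
  \sum_(e <- s) e.1 = 1 /\ \sum_(e <- s) e.1 *: e.2.2 = x.
Definition val (s : comb) := \sum_(e <- s) e.1 * Qf e.2.1 e.2.2.
Definition Vals (x : V) := [set v | exists s, valid x s /\ v = val s].
Definition hh (x : V) := inf (Vals x).


Lemma val_lb p x s : A p -> valid x s -> ell p x <= val s.
Proof.
move=> Ap [vs [s1 s2]].
have E : \sum_(e <- s) e.1 * ell p e.2.2 = ell p x.
  rewrite [RHS]ell_aff.
  set c := f p - dotv p (a p) - C / 2 * dotv p p.
  set w := a p + C *: p.
  transitivity (\sum_(e <- s) (e.1 * c + dotv (e.1 *: e.2.2) w)).
    by apply: eq_bigr => e _; rewrite ell_aff dotvZl -/c -/w; ring.
  rewrite big_split /= -mulr_suml s1 mul1r.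
  by rewrite -(dotv_sum s (fun e => e.1 *: e.2.2)) s2.
rewrite -E /val big_seq_cond [X in _ <= X]big_seq_cond.
apply: ler_sum => e /andP[es _]; have [l0 Aq] := vs e es.
have HH := @ell_le p e.2.1 e.2.2 Ap Aq. by apply: ler_wpM2l.
Qed.

Lemma single_valid q x : A q -> valid x [:: (1, (q, x))].
Proof.
move=> Aq; split; last by rewrite !big_seq1 /= scale1r.
by move=> e; rewrite inE => /eqP -> /=.
Qed.

Lemma Vals_n0 x p : A p -> Vals x !=set0.
Proof. by move=> Ap; exists (val [:: (1, (p, x))]); exists [:: (1, (p, x))]; split => //; apply: single_valid. Qed.

Lemma Vals_lb x p : A p -> has_lbound (Vals x).
Proof. by move=> Ap; exists (ell p x) => v [s [vs ->]]; apply: val_lb vs. Qed.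

Lemma hh_ub q x : A q -> hh x <= Qf q x.
Proof.
move=> Aq; have -> : Qf q x = val [:: (1, (q, x))] by rewrite /val big_seq1 /= mul1r.
by rewrite /hh; apply: (ge_inf (Vals_lb x q Aq)); exists [:: (1, (q, x))]; split => //; apply: single_valid.
Qed.

Lemma hh_lb p x : A p -> ell p x <= hh x.
Proof.
move=> Ap; apply: lb_le_inf; first exact: (Vals_n0 x p Ap).
by move=> v [s [vs ->]]; apply: val_lb vs.
Qed.


Definition scale (t : R) (s : comb) : comb := map (fun e => (t * e.1, e.2)) s.
Definition shift (u : V) (s : comb) : comb := map (fun e => (e.1, (e.2.1, e.2.2 + u))) s.

Lemma scale_valid t x s : 0 <= t -> valid x s ->
  (forall e, e \in scale t s -> 0 <= e.1 /\ A e.2.1) /\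
  \sum_(e <- scale t s) e.1 = t /\ \sum_(e <- scale t s) e.1 *: e.2.2 = t *: x.
Proof.
move=> t0 [vs [s1 s2]]; split; last split.
- move=> e /mapP [e' e's ->] /=; have [l0 Aq] := vs e' e's; split => //.
  exact: mulr_ge0.
- by rewrite big_map /= -mulr_sumr s1 mulr1.
- rewrite big_map /= -s2 scaler_sumr; apply: eq_bigr => e _; by rewrite scalerA.
Qed.

Lemma scale_val t s : val (scale t s) = t * val s.
Proof. by rewrite /val big_map mulr_sumr; apply: eq_bigr => e _ /=; rewrite mulrA. Qed.

Lemma hh_val p x s : A p -> valid x s -> hh x <= val s.
Proof. by move=> Ap vs; rewrite /hh; apply: (ge_inf (Vals_lb x p Ap)); exists s. Qed.

Lemma hh_conv p x y al : A p -> 0 <= al -> al <= 1 ->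
  hh (al *: x + (1 - al) *: y) <= al * hh x + (1 - al) * hh y.
Proof.
move=> Ap al0 al1.
have be0 : 0 <= 1 - al by lra.
have key : forall s1 s2, valid x s1 -> valid y s2 ->
    hh (al *: x + (1 - al) *: y) <= al * val s1 + (1 - al) * val s2.
  move=> s1 s2 v1 v2.
  have [m1 [e1 f1]] := @scale_valid al x s1 al0 v1.
  have [m2 [e2 f2]] := @scale_valid (1 - al) y s2 be0 v2.
  rewrite -!scale_val /val -big_cat.
  apply: (@hh_val p _ (scale al s1 ++ scale (1 - al) s2) Ap); split; last split.
  - by move=> e; rewrite mem_cat => /orP [/m1|/m2].
  - rewrite big_cat e1 e2 /=; lra.
  - by rewrite big_cat f1 f2.
have step1 : forall s2, valid y s2 ->
    hh (al *: x + (1 - al) *: y) - (1 - al) * val s2 <= al * hh x.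
  move=> s2 v2; apply: L_inf => //; first exact: (Vals_n0 x p Ap).
    exact: (Vals_lb x p Ap).
  move=> v [s1 [v1 ->]]; have := key _ _ v1 v2; lra.
have : hh (al *: x + (1 - al) *: y) - al * hh x <= (1 - al) * hh y.
  apply: L_inf => //; first exact: (Vals_n0 y p Ap).
    exact: (Vals_lb y p Ap).
  move=> v [s2 [v2 ->]]; have := step1 _ v2; lra.
lra.
Qed.


Lemma shift_valid u x s : valid x s -> valid (x + u) (shift u s).
Proof.
move=> [vs [s1 s2]]; split; last split.
- by move=> e /mapP [e' e's ->] /=; apply: vs.
- by rewrite big_map /=.
- rewrite big_map /=.
  under eq_bigr do rewrite scalerDr.
  by rewrite big_split /= s2 -scaler_suml s1 scale1r.
Qed.

Lemma hh_sc p x u : A p -> hh (x + u) + hh (x - u) <= 2 * hh x + (2 * C) * dotv u u.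
Proof.
move=> Ap.
have : hh (x + u) + hh (x - u) - (2 * C) * dotv u u <= 2 * hh x.
  apply: L_inf => //; first exact: (Vals_n0 x p Ap).
    exact: (Vals_lb x p Ap).
  move=> v [s [vs ->]].
  have h1 := @hh_val p _ _ Ap (@shift_valid u _ _ vs).
  have h2 := @hh_val p _ _ Ap (@shift_valid (- u) _ _ vs).
  have E : val (shift u s) + val (shift (- u) s) = 2 * val s + 2 * C * dotv u u.
    rewrite /val !big_map /= -big_split /=.
    transitivity (\sum_(e <- s) (2 * (e.1 * Qf e.2.1 e.2.2) + e.1 * (2 * C * dotv u u))).
      by apply: eq_bigr => e _; rewrite -mulrDr Q_sc; ring.
    rewrite big_split /= -mulr_sumr -mulr_suml.
    by case: vs => _ [-> _]; rewrite mul1r.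
  lra.
lra.
Qed.


Lemma main_sec : exists F : V -> R, C11 F /\ (forall x, A x -> F x = f x).
Proof.
case: (pselect (exists p, A p)) => [[p Ap]|nA]; last first.
  exists (fun _ => 0); split; last by move=> x Ax; exfalso; apply: nA; exists x.
  apply: (@taylor_C11 R n _ (fun _ => 0) 0) => // x k.
  by rewrite dotv0r !subrr normr0 mul0r.
have K0 : 0 <= 2 * C by apply: mulr_ge0 => //; apply: ltW; exact: C0.
have hc := fun x y al => @hh_conv p x y al Ap.
have hs := fun x u => @hh_sc p x u Ap.
exists (fun x => hh x - C / 2 * dotv x x); split.
  apply: (@taylor_C11 R n _ (fun x => @Gd R n hh x - C *: x) (2 * C)) => // x k.
  have := @core_taylor R n hh (2 * C) K0 hc hs x k.
  rewrite dotvBr dotvZr nqD (dotvC k x).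
  have := dotv_ge0 k.
  move: (hh (x + k)) (hh x) (dotv k (Gd R n hh x)) (dotv x k) (dotv k k) (dotv x x) => p1 p2 p3 p4 p5 p6.
  move=> d0 /andP[Ha Hb]; rewrite ler_norml; apply/andP; split; nra.
move=> x Ax.
have h1 := @hh_lb x x Ax; have h2 := @hh_ub x x Ax.
move: h1 h2; rewrite /ell /Qf subrr dotv0l !dotv0r; lra.
Qed.

End Main.

Theorem mainTheorem17 (R : realType) (n : nat) (A : set 'rV[R]_n)
  (f : 'rV[R]_n -> R) (C : R) (a : 'rV[R]_n -> 'rV[R]_n) :
  0 < C ->
  (forall p x, A p -> A x ->
     f p + dotv (x - p) (a p) - C / 2 * enorm (x - p) ^+ 2 <= f x /\
     f x <= f p + dotv (x - p) (a p) + C / 2 * enorm (x - p) ^+ 2) ->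
  (forall p q x, A p -> A q ->
     f p + dotv (x - p) (a p) - C / 2 * enorm (x - p) ^+ 2 <=
     f q + dotv (x - q) (a q) + C / 2 * enorm (x - q) ^+ 2) ->
  exists F : 'rV[R]_n -> R, C11 F /\ (forall x, A x -> F x = f x).
Proof. by move=> C0 _ H2; exact: (@main_sec R n A f C a C0 H2). Qed.
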